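(* Let $q$ be a prime power. The maximum size of a substrongly orthogonal set of sudoku solutions of order $q^2$ is $q-1$, and this maximum is achieved.
   Context: A sudoku solution of order $n^2$ is an $n^2\times n^2$ array with entries in $\{0,\dots,n^2-1\}$ in which every symbol occurs exactly once in each row, column and canonical $n\times n$ subsquare. Rows/columns are numbered from $0$; large row $x_1$ is the subarray of rows $x_1n,\dots,x_1n+n-1$, large column $x_3$ the subarray of columns $x_3n,\dots,x_3n+n-1$. Two arrays of the same shape with symbol sets $A$, $B$ are orthogonal if upon superimposition every ordered pair in $A\times B$ appears exactly once (the number of cells equals $|A||B|$ in all uses). Each symbol $x=b_nn+b_1$ ($b_n,b_1\in\{0,\dots,n-1\}$) has radix digit $b_n$. The radix solution $R(M)$ records at each location the radix digit of the symbol of $M$; the composite solution $N_{ij}$ of $M_i,M_j$ has at each location the symbol $n\,r_i+r_j$, where $r_i,r_j$ are the entries of $R(M_i),R(M_j)$ there. A set $\{M_1,\dots,M_m\}$ of mutually orthogonal sudoku solutions of order $n^2$ is substrongly orthogonal if (i) every canonical $n\times n$ subsquare of each $R(M_i)$ is a Latin square, and (ii) for every ordered pair of distinct indices $i,j$: (a) $N_{ij}$ is a sudoku solution, (b) each large row of $R(M_i)$ is orthogonal to the corresponding large row of $M_j$, and (c) each large column of $R(M_i)$ is orthogonal to the corresponding large column of $M_j$. *)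

(* Defs.v *)
From mathcomp Require Import all_boot.
Set Implicit Arguments. Unset Strict Implicit. Unset Printing Implicit Defensive.

(* Arrays of order n^2: cells are pairs (row, column) in 'I_(n*n) * 'I_(n*n);
   entries are natural numbers (symbols are 0 .. n*n-1). *)
Definition cell (n : nat) := ('I_(n * n) * 'I_(n * n))%type.
Definition array (n : nat) := cell n -> nat.

Definition in_block n (a b : 'I_n) (c : cell n) : bool :=
  (c.1 %/ n == a) && (c.2 %/ n == b).
Definition large_row n (x1 : 'I_n) : {set cell n} := [set c : cell n | c.1 %/ n == x1].
Definition large_col n (x3 : 'I_n) : {set cell n} := [set c : cell n | c.2 %/ n == x3].

Definition orthogonal_on n (C : {set cell n}) (A B : array n) (kA kB : nat) :=
  forall a b, a < kA -> b < kB ->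
    #|[set c in C | (A c == a) && (B c == b)]| = 1.

Definition is_sudoku n (M : array n) :=
  [/\ forall c, M c < n * n,
      forall (r : 'I_(n * n)) s, s < n * n ->
        #|[set c : cell n | (c.1 == r) && (M c == s)]| = 1,
      forall (k : 'I_(n * n)) s, s < n * n ->
        #|[set c : cell n | (c.2 == k) && (M c == s)]| = 1 &
      forall (a b : 'I_n) s, s < n * n ->
        #|[set c : cell n | in_block a b c && (M c == s)]| = 1].

Definition radix n (M : array n) : array n := fun c => M c %/ n.
Definition composite n (Mi Mj : array n) : array n :=
  fun c => n * radix Mi c + radix Mj c.

Definition subsquares_latin n (A : array n) :=
  forall (a b : 'I_n) (i : 'I_n) s, s < n ->
    #|[set c : cell n | [&& in_block a b c, c.1 %% n == i & A c == s]]| = 1 /\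
    #|[set c : cell n | [&& in_block a b c, c.2 %% n == i & A c == s]]| = 1.

Definition substrongly_orthogonal n m (M : 'I_m -> array n) :=
  [/\ forall i, is_sudoku (M i),
      forall i j, i != j -> orthogonal_on setT (M i) (M j) (n * n) (n * n),
      forall i, subsquares_latin (radix (M i)) &
      forall i j, i != j ->
        [/\ is_sudoku (composite (M i) (M j)),
            forall x1 : 'I_n, orthogonal_on (large_row x1) (radix (M i)) (M j) n (n * n) &
            forall x3 : 'I_n, orthogonal_on (large_col x3) (radix (M i)) (M j) n (n * n)]].

Definition prime_power (q : nat) := exists p k, [/\ prime p, 0 < k & q = p ^ k].

(* Main.v *)
Require Import Defs.
From mathcomp Require Import all_boot all_algebra all_field.
From mathcomp Require Import ring zify.
Set Implicit Arguments. Unset Strict Implicit. Unset Printing Implicit Defensive.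
Import GRing.Theory.

Lemma count1 (T : finType) (h : T -> nat) N :
  #|T| = N -> (forall c, h c < N) -> injective h ->
  forall k, k < N -> #|[set c | h c == k]| = 1.
Proof.
move=> cT hN hinj k kN.
have sU : uniq (map h (enum T)) by rewrite (map_inj_uniq hinj) enum_uniq.
have sS : {subset map h (enum T) <= iota 0 N}.
  by move=> x /mapP [c _ ->]; rewrite mem_iota add0n hN.
have sz : size (iota 0 N) <= size (map h (enum T)) by rewrite size_iota size_map -cardE cT.
have [_ eqs] := uniq_min_size sU sS sz.
have : k \in map h (enum T) by rewrite eqs mem_iota.
case/mapP => c _ hk; apply/eqP/cards1P; exists c; apply/setP => c'.
rewrite !inE hk; apply/eqP/eqP => [/esym E|->] //; exact: hinj.
Qed.

Definition enc d a b := a * d + b.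

Lemma enc_eq d a b a' b' : b < d -> b' < d -> (enc d a b == enc d a' b') = (a == a') && (b == b').
Proof.
move=> bd b'd; rewrite /enc; apply/eqP/andP => [E|[/eqP -> /eqP ->] //].
have d0 : 0 < d by lia.
have E1 := congr1 (fun x => x %/ d) E; have E2 := congr1 (fun x => x %% d) E.
move: E1 E2 => /=; rewrite !divnMDl // !modnMDl !divn_small // !modn_small // !addn0 => -> ->.
by split.
Qed.

Lemma enc_inj d a b a' b' : b < d -> b' < d -> enc d a b = enc d a' b' -> a = a' /\ b = b'.
Proof. by move=> h1 h2 /eqP; rewrite enc_eq // => /andP [/eqP -> /eqP ->]. Qed.

Lemma enc_lt d a b A : a < A -> b < d -> enc d a b < d * A.
Proof. rewrite /enc => h1 h2; nia. Qed.

Ltac BND := rewrite /enc;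
  repeat match goal with | x : 'I_?k |- _ =>
     lazymatch goal with | _ : is_true (nat_of_ord x < k) |- _ => fail | _ => have ? := ltn_ord x end end;
  nia.

Section Cells.
Variable n : nat.
Implicit Types c : cell n.

Definition X1 c := c.1 %/ n.
Definition X2 c := c.1 %% n.
Definition X3 c := c.2 %/ n.
Definition X4 c := c.2 %% n.

Lemma card_cell : #|{: cell n}| = n * n * (n * n).
Proof. by rewrite card_prod card_ord. Qed.

Lemma X1_lt c : X1 c < n.
Proof. by rewrite /X1 ltn_divLR ?ltn_ord //; case: n c => [|k] [[] ] //. Qed.
Lemma X3_lt c : X3 c < n.
Proof. by rewrite /X3 ltn_divLR ?ltn_ord //; case: n c => [|k] [_ []] //. Qed.
Lemma X2_lt c : X2 c < n.
Proof. by rewrite /X2 ltn_pmod //; case: n c => [|k] [[] ] //. Qed.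
Lemma X4_lt c : X4 c < n.
Proof. by rewrite /X4 ltn_pmod //; case: n c => [|k] [_ []] //. Qed.

Lemma cell_eqX c c' : X1 c = X1 c' -> X2 c = X2 c' -> X3 c = X3 c' -> X4 c = X4 c' -> c = c'.
Proof.
rewrite /X1 /X2 /X3 /X4 => h1 h2 h3 h4.
case: c c' h1 h2 h3 h4 => [a b] [a' b'] /= h1 h2 h3 h4; congr pair; apply: ord_inj.
  by rewrite (divn_eq a n) (divn_eq a' n) h1 h2.
by rewrite (divn_eq b n) (divn_eq b' n) h3 h4.
Qed.

Lemma row_X c c' : c.1 = c'.1 :> nat -> X1 c = X1 c' /\ X2 c = X2 c'.
Proof. by rewrite /X1 /X2 => ->. Qed.
Lemma col_X c c' : c.2 = c'.2 :> nat -> X3 c = X3 c' /\ X4 c = X4 c'.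
Proof. by rewrite /X3 /X4 => ->. Qed.

Lemma sudoku_of (A : array n) :
  (forall c, A c < n * n) ->
  (forall c c', X1 c = X1 c' -> X2 c = X2 c' -> A c = A c' -> c = c') ->
  (forall c c', X3 c = X3 c' -> X4 c = X4 c' -> A c = A c' -> c = c') ->
  (forall c c', X1 c = X1 c' -> X3 c = X3 c' -> A c = A c' -> c = c') ->
  is_sudoku A.
Proof.
move=> Alt Hr Hc Hb; split => //.
- move=> r s slt.
  have hlt : forall c, enc (n*n) c.1 (A c) < n * n * (n * n).
    by move=> c; apply: enc_lt.
  have hinj : injective (fun c => enc (n*n) c.1 (A c)).
    move=> c c' /enc_inj [] // E1 E2; have [] := row_X E1; move=> *; exact: Hr.
  rewrite -(@count1 _ _ _ card_cell hlt hinj (enc (n*n) r s)); last exact: enc_lt.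
  by apply: eq_card => c; rewrite !inE enc_eq ?Alt.
- move=> r s slt.
  have hlt : forall c, enc (n*n) c.2 (A c) < n * n * (n * n).
    by move=> c; apply: enc_lt.
  have hinj : injective (fun c => enc (n*n) c.2 (A c)).
    move=> c c' /enc_inj [] // E1 E2; have [] := col_X E1; move=> *; exact: Hc.
  rewrite -(@count1 _ _ _ card_cell hlt hinj (enc (n*n) r s)); last exact: enc_lt.
  by apply: eq_card => c; rewrite !inE enc_eq ?Alt.
- move=> a b s slt.
  have hlt : forall c, enc (n*n) (enc n (X1 c) (X3 c)) (A c) < n * n * (n * n).
    by move=> c; apply: enc_lt => //; apply: enc_lt; [exact: X1_lt | exact: X3_lt].
  have hinj : injective (fun c => enc (n*n) (enc n (X1 c) (X3 c)) (A c)).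
    move=> c c' /enc_inj [] // /enc_inj [] //; try exact: X3_lt.
    move=> *; exact: Hb.
  rewrite -(@count1 _ _ _ card_cell hlt hinj (enc (n*n) (enc n a b) s)); last first.
    by apply: enc_lt => //; apply: enc_lt.
  apply: eq_card => c; rewrite !inE enc_eq ?Alt // ?enc_eq ?X3_lt //.
  all: try by apply: enc_lt; [exact: X1_lt | exact: X3_lt].
Qed.

Lemma orth_all_of (A B : array n) :
  (forall c, A c < n * n) -> (forall c, B c < n * n) ->
  (forall c c', A c = A c' -> B c = B c' -> c = c') ->
  orthogonal_on setT A B (n * n) (n * n).
Proof.
move=> Alt Blt H a b alt blt.
have hlt : forall c, enc (n*n) (A c) (B c) < n * n * (n * n).
  by move=> c; apply: enc_lt.
have hinj : injective (fun c => enc (n*n) (A c) (B c)).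
  move=> c c' /enc_inj [] // *; exact: H.
rewrite -(@count1 _ _ _ card_cell hlt hinj (enc (n*n) a b)); last exact: enc_lt.
by apply: eq_card => c; rewrite !inE enc_eq ?Blt.
Qed.

Lemma orth_row_of (A B : array n) :
  (forall c, A c < n) -> (forall c, B c < n * n) ->
  (forall c c', X1 c = X1 c' -> A c = A c' -> B c = B c' -> c = c') ->
  forall x1 : 'I_n, orthogonal_on (large_row x1) A B n (n * n).
Proof.
move=> Alt Blt H x1 a b alt blt.
have hlt : forall c, enc (n*n) (enc n (X1 c) (A c)) (B c) < n * n * (n * n).
  by move=> c; apply: enc_lt => //; apply: enc_lt => //; exact: X1_lt.
have hinj : injective (fun c => enc (n*n) (enc n (X1 c) (A c)) (B c)).
  move=> c c' /enc_inj [] // /enc_inj [] // *; exact: H.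
rewrite -(@count1 _ _ _ card_cell hlt hinj (enc (n*n) (enc n x1 a) b)); last first.
  by apply: enc_lt => //; apply: enc_lt.
apply: eq_card => c; rewrite !inE !enc_eq ?Blt ?Alt //.
all: try by apply: enc_lt => //; exact: X1_lt.
by rewrite andbA.
Qed.

Lemma orth_col_of (A B : array n) :
  (forall c, A c < n) -> (forall c, B c < n * n) ->
  (forall c c', X3 c = X3 c' -> A c = A c' -> B c = B c' -> c = c') ->
  forall x3 : 'I_n, orthogonal_on (large_col x3) A B n (n * n).
Proof.
move=> Alt Blt H x1 a b alt blt.
have hlt : forall c, enc (n*n) (enc n (X3 c) (A c)) (B c) < n * n * (n * n).
  by move=> c; apply: enc_lt => //; apply: enc_lt => //; exact: X3_lt.
have hinj : injective (fun c => enc (n*n) (enc n (X3 c) (A c)) (B c)).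
  move=> c c' /enc_inj [] // /enc_inj [] // *; exact: H.
rewrite -(@count1 _ _ _ card_cell hlt hinj (enc (n*n) (enc n x1 a) b)); last first.
  by apply: enc_lt => //; apply: enc_lt.
apply: eq_card => c; rewrite !inE !enc_eq ?Blt ?Alt //.
all: try by apply: enc_lt => //; exact: X3_lt.
by rewrite andbA.
Qed.

Lemma latin_of (A : array n) :
  (forall c, A c < n) ->
  (forall c c', X1 c = X1 c' -> X3 c = X3 c' -> X2 c = X2 c' -> A c = A c' -> c = c') ->
  (forall c c', X1 c = X1 c' -> X3 c = X3 c' -> X4 c = X4 c' -> A c = A c' -> c = c') ->
  subsquares_latin A.
Proof.
move=> Alt H2 H4 a b i s slt.
have cc : #|{: cell n}| = n * (n * (n * n)) by rewrite card_cell !mulnA.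
split.
  have hlt : forall c, enc n (enc n (enc n (X1 c) (X3 c)) (X2 c)) (A c) < n * (n * (n * n)).
    move=> c; apply: enc_lt => //; apply: enc_lt; last exact: X2_lt.
    by apply: enc_lt; [exact: X1_lt| exact: X3_lt].
  have hinj : injective (fun c => enc n (enc n (enc n (X1 c) (X3 c)) (X2 c)) (A c)).
    move=> c c' /enc_inj [] // /enc_inj []; try exact: X2_lt.
    move=> /enc_inj [] //; try exact: X3_lt.
    move=> *; exact: H2.
  rewrite -(@count1 _ _ _ cc hlt hinj (enc n (enc n (enc n a b) i) s)); last first.
    by apply: enc_lt => //; apply: enc_lt => //; apply: enc_lt.
  apply: eq_card => c; rewrite !inE !enc_eq ?X2_lt ?X3_lt ?Alt //.
  all: try by apply: enc_lt; [apply: enc_lt; [exact: X1_lt| exact: X3_lt] | exact: X2_lt].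
  by rewrite /in_block !andbA.
have hlt : forall c, enc n (enc n (enc n (X1 c) (X3 c)) (X4 c)) (A c) < n * (n * (n * n)).
  move=> c; apply: enc_lt => //; apply: enc_lt; last exact: X4_lt.
  by apply: enc_lt; [exact: X1_lt| exact: X3_lt].
have hinj : injective (fun c => enc n (enc n (enc n (X1 c) (X3 c)) (X4 c)) (A c)).
  move=> c c' /enc_inj [] // /enc_inj []; try exact: X4_lt.
  move=> /enc_inj [] //; try exact: X3_lt.
  move=> *; exact: H4.
rewrite -(@count1 _ _ _ cc hlt hinj (enc n (enc n (enc n a b) i) s)); last first.
  by apply: enc_lt => //; apply: enc_lt => //; apply: enc_lt.
apply: eq_card => c; rewrite !inE !enc_eq ?X4_lt ?X3_lt ?Alt //.
all: try by apply: enc_lt; [apply: enc_lt; [exact: X1_lt| exact: X3_lt] | exact: X4_lt].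
by rewrite /in_block !andbA.
Qed.

End Cells.


Section Alg.
Variable F : fieldType.
Local Open Scope ring_scope.

Lemma lin2 (p q r s x y : F) : p*s - q*r != 0 -> p*x + q*y = 0 -> r*x + s*y = 0 -> x = 0 /\ y = 0.
Proof.
move=> D e1 e2; split.
  have E : (p*s - q*r) * x = s*(p*x + q*y) - q*(r*x + s*y) by ring.
  have : (p*s - q*r) * x = 0 by rewrite E e1 e2 !mulr0 subrr.
  by move/eqP; rewrite mulf_eq0 (negbTE D) => /eqP.
have E : (p*s - q*r) * y = p*(r*x + s*y) - r*(p*x + q*y) by ring.
have : (p*s - q*r) * y = 0 by rewrite E e1 e2 !mulr0 subrr.
by move/eqP; rewrite mulf_eq0 (negbTE D) => /eqP.
Qed.

Variables a1 a2 a3 a4 : F -> F.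
Definition Pf (al d1 d2 d3 d4 : F) := d1 + al*d2 + al*d3 + d4.
Definition Af (al d1 d2 d3 d4 : F) := a1 al*d1 + a2 al*d2 + a3 al*d3 + a4 al*d4.

Lemma alg_row al d1 d2 d3 d4 : al * a4 al - a3 al != 0 -> d1 = 0 -> d2 = 0 ->
  Pf al d1 d2 d3 d4 = 0 -> Af al d1 d2 d3 d4 = 0 -> d3 = 0 /\ d4 = 0.
Proof.
move=> D h1 h2 e1 e2; apply: (@lin2 al 1 (a3 al) (a4 al)).
- by rewrite mul1r.
- by rewrite -e1 /Pf h1 h2; ring.
- by rewrite -e2 /Af h1 h2; ring.
Qed.

Lemma alg_col al d1 d2 d3 d4 : a2 al - al * a1 al != 0 -> d3 = 0 -> d4 = 0 ->
  Pf al d1 d2 d3 d4 = 0 -> Af al d1 d2 d3 d4 = 0 -> d1 = 0 /\ d2 = 0.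
Proof.
move=> D h1 h2 e1 e2; apply: (@lin2 1 al (a1 al) (a2 al)).
- by rewrite mul1r.
- by rewrite -e1 /Pf h1 h2; ring.
- by rewrite -e2 /Af h1 h2; ring.
Qed.

Lemma alg_box al d1 d2 d3 d4 : al * a4 al - a2 al != 0 -> d1 = 0 -> d3 = 0 ->
  Pf al d1 d2 d3 d4 = 0 -> Af al d1 d2 d3 d4 = 0 -> d2 = 0 /\ d4 = 0.
Proof.
move=> D h1 h2 e1 e2; apply: (@lin2 al 1 (a2 al) (a4 al)).
- by rewrite mul1r.
- by rewrite -e1 /Pf h1 h2; ring.
- by rewrite -e2 /Af h1 h2; ring.
Qed.

Lemma alg_lat1 al d1 d2 d3 d4 : d1 = 0 -> d2 = 0 -> d3 = 0 -> Pf al d1 d2 d3 d4 = 0 -> d4 = 0.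
Proof. by move=> h1 h2 h3; rewrite /Pf h1 h2 h3 !mulr0 !add0r. Qed.

Lemma alg_lat2 al d1 d2 d3 d4 : al != 0 -> d1 = 0 -> d3 = 0 -> d4 = 0 -> Pf al d1 d2 d3 d4 = 0 -> d2 = 0.
Proof.
move=> D h1 h3 h4; rewrite /Pf h1 h3 h4 !mulr0 !addr0 add0r => /eqP.
by rewrite mulf_eq0 (negbTE D) => /eqP.
Qed.

Lemma alg_P2 al be d1 d2 d3 d4 : al != be -> Pf al d1 d2 d3 d4 = 0 -> Pf be d1 d2 d3 d4 = 0 ->
  d3 = - d2 /\ d4 = - d1.
Proof.
move=> D e1 e2.
have E : (al - be) * (d2 + d3) = Pf al d1 d2 d3 d4 - Pf be d1 d2 d3 d4 by rewrite /Pf; ring.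
have h : (al - be) * (d2 + d3) = 0 by rewrite E e1 e2 subrr.
move/eqP: h; rewrite mulf_eq0 subr_eq0 (negbTE D) /= addrC addr_eq0 => /eqP h3.
split => //; apply/eqP; rewrite -addr_eq0 addrC; apply/eqP.
by rewrite -e1 /Pf h3; ring.
Qed.

Lemma alg_crow al be d1 d2 d3 d4 : al != be -> d1 = 0 -> d2 = 0 -> Pf al d1 d2 d3 d4 = 0 -> Pf be d1 d2 d3 d4 = 0 ->
  d3 = 0 /\ d4 = 0.
Proof. by move=> D h1 h2 e1 e2; have [-> ->] := alg_P2 D e1 e2; rewrite h1 h2 oppr0. Qed.

Lemma alg_ccol al be d1 d2 d3 d4 : al != be -> d3 = 0 -> d4 = 0 -> Pf al d1 d2 d3 d4 = 0 -> Pf be d1 d2 d3 d4 = 0 ->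
  d1 = 0 /\ d2 = 0.
Proof.
move=> D h3 h4 e1 e2; have [h3' h4'] := alg_P2 D e1 e2.
by split; apply/eqP; rewrite -oppr_eq0 ?(esym h3', h3) ?(esym h4', h4) -?h3' -?h4' ?h3 ?h4.
Qed.

Lemma alg_cbox al be d1 d2 d3 d4 : al != be -> d1 = 0 -> d3 = 0 -> Pf al d1 d2 d3 d4 = 0 -> Pf be d1 d2 d3 d4 = 0 ->
  d2 = 0 /\ d4 = 0.
Proof.
move=> D h1 h3 e1 e2; have [h3' h4'] := alg_P2 D e1 e2.
by split; [apply/eqP; rewrite -oppr_eq0 -h3' h3 | rewrite h4' h1 oppr0].
Qed.

Lemma alg_b al be d1 d2 d3 d4 : al != be -> a2 be != a3 be -> d1 = 0 ->
  Pf al d1 d2 d3 d4 = 0 -> Pf be d1 d2 d3 d4 = 0 -> Af be d1 d2 d3 d4 = 0 ->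
  [/\ d2 = 0, d3 = 0 & d4 = 0].
Proof.
move=> D D2 h1 e1 e2 e3; have [h3 h4] := alg_P2 D e1 e2.
have h2 : d2 = 0.
  have : (a2 be - a3 be) * d2 = 0 by rewrite -e3 /Af h3 h4 h1; ring.
  by move/eqP; rewrite mulf_eq0 subr_eq0 (negbTE D2) => /eqP.
by rewrite h3 h4 h1 h2 oppr0.
Qed.

Lemma alg_c al be d1 d2 d3 d4 : al != be -> a1 be != a4 be -> d3 = 0 ->
  Pf al d1 d2 d3 d4 = 0 -> Pf be d1 d2 d3 d4 = 0 -> Af be d1 d2 d3 d4 = 0 ->
  [/\ d1 = 0, d2 = 0 & d4 = 0].
Proof.
move=> D D2 h3' e1 e2 e3; have [h3 h4] := alg_P2 D e1 e2.
have h2 : d2 = 0 by apply/eqP; rewrite -oppr_eq0 -h3 h3'.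
have h1 : d1 = 0.
  have : (a1 be - a4 be) * d1 = 0 by rewrite -e3 /Af h3 h4 h2; ring.
  by move/eqP; rewrite mulf_eq0 subr_eq0 (negbTE D2) => /eqP.
by rewrite h4 h1 h2 oppr0.
Qed.

Lemma alg_orth al be d1 d2 d3 d4 : al != be ->
  (a1 al - a4 al) * (a2 be - a3 be) - (a2 al - a3 al) * (a1 be - a4 be) != 0 ->
  Pf al d1 d2 d3 d4 = 0 -> Af al d1 d2 d3 d4 = 0 -> Pf be d1 d2 d3 d4 = 0 -> Af be d1 d2 d3 d4 = 0 ->
  [/\ d1 = 0, d2 = 0, d3 = 0 & d4 = 0].
Proof.
move=> D Dt e1 e2 e3 e4; have [h3 h4] := alg_P2 D e1 e3.
have [h1 h2] : d1 = 0 /\ d2 = 0.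
  apply: (lin2 Dt).
  - by rewrite -e2 /Af h3 h4; ring.
  - by rewrite -e4 /Af h3 h4; ring.
by rewrite h3 h4 h1 h2 oppr0.
Qed.
End Alg.


Section Arr.
Variable F : finFieldType.
Variable n : nat.
Hypothesis HF : #|F| = n.

Definition fv (x : nat) : F := nth 0%R (enum F) x.
Definition idx (a : F) : nat := index a (enum F).

Lemma idx_lt a : idx a < n.
Proof. by rewrite /idx -HF cardE index_mem mem_enum. Qed.
Lemma fv_idx a : fv (idx a) = a.
Proof. by rewrite /fv /idx nth_index // mem_enum. Qed.
Lemma idx_inj : injective idx.
Proof. exact: can_inj fv_idx. Qed.
Lemma fv_inj x y : x < n -> y < n -> fv x = fv y -> x = y.
Proof.
move=> hx hy E; rewrite -(@index_uniq _ 0%R x (enum F)) ?enum_uniq -?cardE ?HF //.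
by rewrite -(@index_uniq _ 0%R y (enum F)) ?enum_uniq -?cardE ?HF // -/(fv x) E.
Qed.

Variables a1 a2 a3 a4 : F -> F.

Definition u1 (c : cell n) := fv (X1 c).
Definition u2 (c : cell n) := fv (X2 c).
Definition u3 (c : cell n) := fv (X3 c).
Definition u4 (c : cell n) := fv (X4 c).

Definition L1 (al : F) c := Pf al (u1 c) (u2 c) (u3 c) (u4 c).
Definition L2 (al : F) c := Af a1 a2 a3 a4 al (u1 c) (u2 c) (u3 c) (u4 c).
Definition Marr (al : F) : array n := fun c => enc n (idx (L1 al c)) (idx (L2 al c)).

Lemma Marr_lt al c : Marr al c < n * n.
Proof. by apply: enc_lt; apply: idx_lt. Qed.

Lemma radix_Marr al c : radix (Marr al) c = idx (L1 al c).
Proof.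
rewrite /radix /Marr /enc divnMDl; last by case: n (idx_lt (L1 al c)).
by rewrite divn_small ?addn0 // idx_lt.
Qed.

Lemma radix_lt al c : radix (Marr al) c < n.
Proof. by rewrite radix_Marr idx_lt. Qed.

Lemma Marr_inj al c c' : Marr al c = Marr al c' -> L1 al c = L1 al c' /\ L2 al c = L2 al c'.
Proof. by move=> /(enc_inj (idx_lt _) (idx_lt _)) [/idx_inj -> /idx_inj ->]. Qed.

Lemma comp_Marr al be c : composite (Marr al) (Marr be) c = enc n (idx (L1 al c)) (idx (L1 be c)).
Proof. by rewrite /composite !radix_Marr /enc mulnC. Qed.

Lemma comp_inj al be c c' : composite (Marr al) (Marr be) c = composite (Marr al) (Marr be) c' ->
  L1 al c = L1 al c' /\ L1 be c = L1 be c'.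
Proof. by rewrite !comp_Marr => /(enc_inj (idx_lt _) (idx_lt _)) [/idx_inj -> /idx_inj ->]. Qed.

Local Open Scope ring_scope.

Definition dd (u : cell n -> F) c c' := u c - u c'.

Lemma dL1 al c c' : L1 al c = L1 al c' -> Pf al (dd u1 c c') (dd u2 c c') (dd u3 c c') (dd u4 c c') = 0.
Proof.
move=> E.
have E' : Pf al (dd u1 c c') (dd u2 c c') (dd u3 c c') (dd u4 c c') = L1 al c - L1 al c'.
  by rewrite /L1 /Pf /dd; ring.
by rewrite E' E subrr.
Qed.

Lemma dL2 al c c' : L2 al c = L2 al c' -> Af a1 a2 a3 a4 al (dd u1 c c') (dd u2 c c') (dd u3 c c') (dd u4 c c') = 0.
Proof.
move=> E.
have E' : Af a1 a2 a3 a4 al (dd u1 c c') (dd u2 c c') (dd u3 c c') (dd u4 c c') = L2 al c - L2 al c'.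
  by rewrite /L2 /Af /dd; ring.
by rewrite E' E subrr.
Qed.

Lemma ddX1 c c' : X1 c = X1 c' -> dd u1 c c' = 0. Proof. by rewrite /dd /u1 => ->; rewrite subrr. Qed.
Lemma ddX2 c c' : X2 c = X2 c' -> dd u2 c c' = 0. Proof. by rewrite /dd /u2 => ->; rewrite subrr. Qed.
Lemma ddX3 c c' : X3 c = X3 c' -> dd u3 c c' = 0. Proof. by rewrite /dd /u3 => ->; rewrite subrr. Qed.
Lemma ddX4 c c' : X4 c = X4 c' -> dd u4 c c' = 0. Proof. by rewrite /dd /u4 => ->; rewrite subrr. Qed.

Lemma dd_cell c c' : dd u1 c c' = 0 -> dd u2 c c' = 0 -> dd u3 c c' = 0 -> dd u4 c c' = 0 -> c = c'.
Proof.
rewrite /dd /u1 /u2 /u3 /u4 => /eqP h1 /eqP h2 /eqP h3 /eqP h4.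
move: h1 h2 h3 h4; rewrite !subr_eq0 => /eqP h1 /eqP h2 /eqP h3 /eqP h4.
apply: cell_eqX; apply: fv_inj => //; by [apply: X1_lt | apply: X2_lt | apply: X3_lt | apply: X4_lt].
Qed.

Lemma family_ok m (alpha : 'I_m -> F) :
  (forall al, al != 0 -> al * a4 al - a3 al != 0) ->
  (forall al, al != 0 -> a2 al - al * a1 al != 0) ->
  (forall al, al != 0 -> al * a4 al - a2 al != 0) ->
  (forall al be, al != 0 -> be != 0 -> al != be -> a2 be != a3 be) ->
  (forall al be, al != 0 -> be != 0 -> al != be -> a1 be != a4 be) ->
  (forall al be, al != 0 -> be != 0 -> al != be ->
     (a1 al - a4 al) * (a2 be - a3 be) - (a2 al - a3 al) * (a1 be - a4 be) != 0) ->
  injective alpha -> (forall i, alpha i != 0) ->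
  substrongly_orthogonal (fun i => Marr (alpha i)).
Proof.
move=> Hrow Hcol Hbox Hb Hc Hor ainj anz.
have aneq : forall i j : 'I_m, i != j -> alpha i != alpha j by move=> i j; rewrite inj_eq.
split.
- move=> i; apply: sudoku_of; first exact: Marr_lt.
  + move=> c c' h1 h2 /Marr_inj [e1 e2].
    have [z3 z4] := alg_row (Hrow _ (anz i)) (ddX1 h1) (ddX2 h2) (dL1 e1) (dL2 e2).
    exact: dd_cell (ddX1 h1) (ddX2 h2) z3 z4.
  + move=> c c' h3 h4 /Marr_inj [e1 e2].
    have [z1 z2] := alg_col (Hcol _ (anz i)) (ddX3 h3) (ddX4 h4) (dL1 e1) (dL2 e2).
    exact: dd_cell z1 z2 (ddX3 h3) (ddX4 h4).
  + move=> c c' h1 h3 /Marr_inj [e1 e2].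
    have [z2 z4] := alg_box (Hbox _ (anz i)) (ddX1 h1) (ddX3 h3) (dL1 e1) (dL2 e2).
    exact: dd_cell (ddX1 h1) z2 (ddX3 h3) z4.
- move=> i j ij; apply: orth_all_of; try exact: Marr_lt.
  move=> c c' /Marr_inj [e1 e2] /Marr_inj [e3 e4].
  have [z1 z2 z3 z4] := alg_orth (aneq _ _ ij) (Hor _ _ (anz i) (anz j) (aneq _ _ ij)) (dL1 e1) (dL2 e2) (dL1 e3) (dL2 e4).
  exact: dd_cell z1 z2 z3 z4.
- move=> i; apply: latin_of; first exact: radix_lt.
  + move=> c c' h1 h3 h2; rewrite !radix_Marr => /idx_inj e1.
    have z4 := alg_lat1 (ddX1 h1) (ddX2 h2) (ddX3 h3) (dL1 e1).
    exact: dd_cell (ddX1 h1) (ddX2 h2) (ddX3 h3) z4.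
  + move=> c c' h1 h3 h4; rewrite !radix_Marr => /idx_inj e1.
    have z2 := alg_lat2 (anz i) (ddX1 h1) (ddX3 h3) (ddX4 h4) (dL1 e1).
    exact: dd_cell (ddX1 h1) z2 (ddX3 h3) (ddX4 h4).
- move=> i j ij; have D := aneq _ _ ij; split.
  + apply: sudoku_of.
    * by move=> c; rewrite comp_Marr; apply: enc_lt; apply: idx_lt.
    * move=> c c' h1 h2 /comp_inj [e1 e2].
      have [z3 z4] := alg_crow D (ddX1 h1) (ddX2 h2) (dL1 e1) (dL1 e2).
      exact: dd_cell (ddX1 h1) (ddX2 h2) z3 z4.
    * move=> c c' h3 h4 /comp_inj [e1 e2].
      have [z1 z2] := alg_ccol D (ddX3 h3) (ddX4 h4) (dL1 e1) (dL1 e2).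
      exact: dd_cell z1 z2 (ddX3 h3) (ddX4 h4).
    * move=> c c' h1 h3 /comp_inj [e1 e2].
      have [z2 z4] := alg_cbox D (ddX1 h1) (ddX3 h3) (dL1 e1) (dL1 e2).
      exact: dd_cell (ddX1 h1) z2 (ddX3 h3) z4.
  + apply: orth_row_of; [exact: radix_lt | exact: Marr_lt |].
    move=> c c' h1; rewrite !radix_Marr => /idx_inj e1 /Marr_inj [e2 e3].
    have [z2 z3 z4] := alg_b D (Hb _ _ (anz i) (anz j) D) (ddX1 h1) (dL1 e1) (dL1 e2) (dL2 e3).
    exact: dd_cell (ddX1 h1) z2 z3 z4.
  + apply: orth_col_of; [exact: radix_lt | exact: Marr_lt |].
    move=> c c' h3; rewrite !radix_Marr => /idx_inj e1 /Marr_inj [e2 e3].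
    have [z1 z2 z4] := alg_c D (Hc _ _ (anz i) (anz j) D) (ddX3 h3) (dL1 e1) (dL1 e2) (dL2 e3).
    exact: dd_cell z1 z2 (ddX3 h3) z4.
Qed.

End Arr.


Lemma card1_eq (T : finType) (A : {set T}) a b :
  #|A| = 1 -> a \in A -> b \in A -> a = b.
Proof.
move=> /eqP/cards1P [x ->]; rewrite !inE => /eqP -> /eqP -> //.
Qed.

Lemma card1_ex (T : finType) (A : {set T}) : #|A| = 1 -> exists a, a \in A.
Proof. by move=> /eqP/cards1P [x ->]; exists x; rewrite inE. Qed.

Lemma upper_bound n m (M : 'I_m -> array n) : 1 < n ->
  substrongly_orthogonal M -> m <= n - 1.
Proof.
move=> n1 [Hs Ho Hl Hp].
have n0 : 0 < n by lia.
have nn0 : 0 < n * n by lia.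
have nn1 : 1 < n * n by nia.
pose z : 'I_n := Ordinal n0.
pose r0 : 'I_(n*n) := Ordinal nn0.
pose r1 : 'I_(n*n) := Ordinal nn1.
pose c0 : cell n := (r0, r0).
pose c1 : cell n := (r1, r0).
have Rlt : forall i c, radix (M i) c < n.
  move=> i c; rewrite /radix ltn_divLR //; by case: (Hs i) => H _ _ _.
have blk1 : in_block z z c1 by rewrite /in_block /= divn_small // divn_small.
have blk0 : in_block z z c0 by rewrite /in_block /= divn_small.
have ex : forall i, exists d : cell n,
   [/\ d.1 = r0 :> nat, 0 < d.2 < n & radix (M i) d = radix (M i) c1].
  move=> i; have [H _] := Hl i z z z _ (Rlt i c1).
  have [d] := card1_ex H; rewrite inE => /and3P [/andP [/eqP h1 /eqP h2] /eqP h3 /eqP h4].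
  have d1 : d.1 = r0 :> nat.
    by rewrite /= (divn_eq d.1 n) h1 h3.
  have d2n : d.2 < n.
    have := ltn_ord d.2; rewrite (divn_eq d.2 n) h2 /=; move: (ltn_pmod d.2 n0); lia.
  exists d; split => //; apply/andP; split => //.
  rewrite lt0n; apply/negP => /eqP d20.
  have [_ H'] := Hl i z z z _ (Rlt i c1).
  have dc0 : d = c0.
    case: d d1 d20 {h1 h2 h3 h4 d2n} => a b /= ha hb; congr pair; exact: val_inj.
  have := card1_eq H' (a := c0) (b := c1).
  rewrite !inE blk0 blk1 /= !mod0n -dc0 h4 /= => /(_ (eqxx _) (eqxx _)).
  by move=> /(congr1 (fun c => val c.1)); rewrite dc0.
have {}ex : forall i, {d : cell n | [&& d.1 == r0 :> nat, 0 < d.2 < n & radix (M i) d == radix (M i) c1]}.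
  move=> i; apply: sigW; have [d [h1 h2 h3]] := ex i; exists d; rewrite h1 h2 h3 !eqxx //.
pose f i : nat := (sval (ex i)).2.
have fP : forall i, 0 < f i < n.
  move=> i; rewrite /f /=; case: (ex i) => d /= /and3P [_ -> //].
have finj : {in predT &, injective f}.
  move=> i j _ _ eqf; apply/eqP/negPn/negP => ij.
  case: (Hp i j ij) => [[_ _ _ Hb] _ _].
  have rlt : composite (M i) (M j) c1 < n * n.
    rewrite /composite; have := Rlt i c1; have := Rlt j c1; nia.
  move: eqf; rewrite /f; case: (ex i) => d /= /and3P [/eqP d1 /andP [_ d2n] /eqP rd].
  case: (ex j) => e /= /and3P [/eqP e1 /andP [_ _] /eqP re] de.
  have dee : d = e.
    case: d e d1 e1 de rd re d2n => [a b] [a' b'] /= ha hb hab _ _ _; congr pair; apply: val_inj => //=.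
    by rewrite ha hb.
  subst e.
  have blkd : in_block z z d.
    by rewrite /in_block d1 /= divn_small // divn_small.
  have := card1_eq (Hb z z _ rlt) (a := d) (b := c1).
  rewrite !inE blk1 blkd /composite rd re eqxx /= => /(_ isT isT).
  by move=> /(congr1 (fun c => val c.1)); rewrite /= d1.
pose g i : 'I_n := insubd z (f i).
have gv : forall i, val (g i) = f i.
  move=> i; rewrite /g val_insubd; by case/andP: (fP i) => _ ->.
have ginj : injective g.
  move=> i j /(congr1 val); rewrite !gv => /finj; exact.
have sub : codom g \subset [set x : 'I_n | x != z].
  apply/subsetP => x /codomP [i ->]; rewrite inE; apply/eqP => /(congr1 val).
  rewrite gv /=; case/andP: (fP i); lia.
have := subset_leq_card sub; rewrite card_codom // card_ord.
have -> : [set x : 'I_n | x != z] = [set~ z] by apply/setP => x; rewrite !inE.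
by rewrite cardsC1 card_ord subn1.
Qed.


Lemma card_nonzero (F : finFieldType) : #|[set x : F | x != 0%R]| = #|F| - 1.
Proof.
have -> : [set x : F | x != 0%R] = [set~ 0%R] by apply/setP => x; rewrite !inE.
by rewrite cardsC1 subn1.
Qed.

Lemma two_elems (F : finFieldType) : #|F| <= 2 -> forall x : F, (x == 0%R) || (x == 1%R).
Proof.
move=> h2 x.
have c2 : #|[set 0%R; 1%R : F]| = 2 by rewrite cards2 eq_sym oner_neq0.
have := cardC [set 0%R; 1%R : F]; rewrite c2 => hc.
have h0 : #|[predC [set 0%R; 1%R : F]]| = 0 by have := leq_trans (eq_leq hc) h2; lia.
have := card0_eq h0 x; rewrite !inE /=.
by case: (_ || _).
Qed.

Lemma exists_third (F : finFieldType) : 2 < #|F| -> exists k : F, (k != 0%R) && (k != 1%R).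
Proof.
move=> h3; case: (pickP (fun k : F => (k != 0%R) && (k != 1%R))) => [k hk | H]; first by exists k.
have h2 : #|F| <= 2.
  have sub : [set: F] \subset [set 0%R; 1%R] .
    by apply/subsetP => x _; move: (H x) => /negbT; rewrite !inE negb_and !negbK.
  have := subset_leq_card sub; rewrite cardsT => h; apply: (leq_trans h).
  by rewrite cards2; case: (_ != _).
by move: h3; rewrite ltnNge h2.
Qed.

Lemma existence (F : finFieldType) (q : nat) : #|F| = q -> 1 < q ->
  exists M : 'I_(q - 1) -> array q, substrongly_orthogonal M.
Proof.
move=> HF q1.
pose S := [set x : F | x != 0%R].
have E : q - 1 = #|S| by rewrite card_nonzero HF.
pose alpha (i : 'I_(q - 1)) : F := enum_val (cast_ord E i).
have ainj : injective alpha.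
  by move=> i j /enum_val_inj /cast_ord_inj.
have anz : forall i, alpha i != 0%R.
  by move=> i; have := enum_valP (cast_ord E i); rewrite inE.
case: (leqP q 2) => hq2.
  have F2 : #|F| <= 2 by rewrite HF.
  have one : forall x : F, x != 0%R -> x = 1%R.
    by move=> x; have := two_elems F2 x; case: eqP => //= _ /eqP.
  exists (fun i => Marr (fun _ => 0%R) (fun _ => 1%R) (fun _ => 1%R) (fun _ => 0%R) (alpha i)).
  apply: (family_ok HF) => //.
  - by move=> al _; rewrite mulr0 sub0r oppr_eq0 oner_neq0.
  - by move=> al _; rewrite mulr0 subr0 oner_neq0.
  - by move=> al _; rewrite mulr0 sub0r oppr_eq0 oner_neq0.
  - by move=> al be /one -> /one ->; rewrite eqxx.
  - by move=> al be /one -> /one ->; rewrite eqxx.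
  - by move=> al be /one -> /one ->; rewrite eqxx.
have [k /andP [k0 k1]] := exists_third (leq_trans hq2 (eq_leq (esym HF))).
exists (fun i => Marr (fun _ => 1%R) (fun al => k * al)%R (fun al => (k - 1) * al)%R (fun _ => 0%R) (alpha i)).
have k1' : (k - 1 != 0)%R by rewrite subr_eq0.
apply: (family_ok HF) => //.
- by move=> al al0; rewrite mulr0 sub0r oppr_eq0 mulf_neq0.
- move=> al al0; rewrite (_ : (k * al - al * 1 = (k - 1) * al)%R); first exact: mulf_neq0.
  by ring.
- by move=> al al0; rewrite mulr0 sub0r oppr_eq0 mulf_neq0.
- move=> al be _ be0 _; apply/eqP => /eqP; rewrite -subr_eq0.
  by rewrite (_ : (k * be - (k - 1) * be = be)%R) ?(negbTE be0) //; ring.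
- by move=> *; rewrite oner_neq0.
- move=> al be _ _ ab.
  rewrite (_ : ((1 - 0) * (k * be - (k - 1) * be) - (k * al - (k - 1) * al) * (1 - 0) = be - al)%R).
    by rewrite subr_eq0 eq_sym.
  by ring.
Qed.

Theorem theorem5p2 (q : nat) (hq : prime_power q) :
  (exists M : 'I_(q - 1) -> array q, substrongly_orthogonal M) /\
  (forall (m : nat) (M : 'I_m -> array q), substrongly_orthogonal M -> m <= q - 1).
Proof.
case: hq => p [k [pp k0 ->]].
have q1 : 1 < p ^ k.
  have p1 := prime_gt1 pp.
  by apply: (leq_trans p1); rewrite -{1}(expn1 p) leq_pexp2l // ltnW.
split; last by move=> m M; apply: upper_bound.
have [F _ HF] := pPrimePowerField pp k0.
exact: existence HF q1.
Qed.
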